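(* For every band operator $A$ on $\ell^2(\mathbb{Z})$ and every $\varepsilon>0$ there are $l,r\in\mathbb{Z}$ such that $\nu(A)\le\nu_{l..r}(A)<\nu(A)+\varepsilon$.
   Context: A band operator on $\ell^2(\mathbb{Z})$ is a finite sum $\sum_{k=-w}^{w}M_{a^{(k)}}S^k$ with $a^{(k)}\in\ell^\infty(\mathbb{Z})$, $(Sx)_n=x_{n-1}$, $(M_ax)_n=a_nx_n$. $\nu(A):=\inf\{\|Ax\|:\|x\|=1\}$; for $l..r:=\{n\in\mathbb{Z}:l\le n\le r\}$, $\nu_{l..r}(A):=\inf\{\|Ax\|:\operatorname{supp}x\subseteq l..r,\ \|x\|=1\}$. *)

(* Defs.v *)
From Stdlib Require Import Reals ZArith List Lia.
From Coquelicot Require Import Coquelicot.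
Open Scope R_scope.

Definition summableZ (f : Z -> R) : Prop :=
  ex_series (fun n : nat => f (Z.of_nat n)) /\
  ex_series (fun n : nat => f (- Z.of_nat n - 1)%Z).

Definition SeriesZ (f : Z -> R) : R :=
  Series (fun n : nat => f (Z.of_nat n)) + Series (fun n : nat => f (- Z.of_nat n - 1)%Z).

Definition l2 (x : Z -> C) : Prop := summableZ (fun n => (Cmod (x n)) ^ 2).
Definition l2norm (x : Z -> C) : R := sqrt (SeriesZ (fun n => (Cmod (x n)) ^ 2)).

(* shift (S x)_n = x_{n-1}, so (S^k x)_n = x_{n-k}; multiplication (M_a x)_n = a_n x_n *)
Definition bounded_seqZ (a : Z -> C) : Prop := exists M : R, forall n, Cmod (a n) <= M.

(* band operator sum_{k=-w}^{w} M_{a k} S^k *)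
Definition band_apply (w : nat) (a : Z -> Z -> C) (x : Z -> C) : Z -> C :=
  fun n => fold_right Cplus (RtoC 0)
    (map (fun j : nat => let k := (Z.of_nat j - Z.of_nat w)%Z in Cmult (a k n) (x (n - k)%Z))
         (seq 0 (2 * w + 1))).

Definition nu (A : (Z -> C) -> (Z -> C)) : Rbar :=
  Glb_Rbar (fun t => exists x, l2 x /\ l2norm x = 1 /\ t = l2norm (A x)).

Definition nu_lr (A : (Z -> C) -> (Z -> C)) (l r : Z) : Rbar :=
  Glb_Rbar (fun t => exists x, l2 x /\
     (forall n, (n < l \/ r < n)%Z -> x n = RtoC 0) /\
     l2norm x = 1 /\ t = l2norm (A x)).

(* Main.v *)
Require Import Defs.
From Stdlib Require Import Reals ZArith List.
From Coquelicot Require Import Coquelicot.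
From Stdlib Require Import Lia Lra Psatz Classical.
Open Scope R_scope.


Lemma sZ_le (f g : Z -> R) : (forall n, 0 <= f n <= g n) -> summableZ g ->
  summableZ f /\ SeriesZ f <= SeriesZ g.
Proof.
  intros H [Hg1 Hg2]. unfold summableZ, SeriesZ.
  assert (A1 : ex_series (fun n : nat => f (Z.of_nat n))).
  { apply (@ex_series_le R_AbsRing R_CompleteNormedModule _ (fun n : nat => g (Z.of_nat n))); auto.
    intros n. unfold norm; simpl. specialize (H (Z.of_nat n)).
    rewrite Rabs_pos_eq; lra. }
  assert (A2 : ex_series (fun n : nat => f (- Z.of_nat n - 1)%Z)).
  { apply (@ex_series_le R_AbsRing R_CompleteNormedModule _ (fun n : nat => g (- Z.of_nat n - 1)%Z)); auto.
    intros n. unfold norm; simpl. specialize (H (- Z.of_nat n - 1)%Z).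
    rewrite Rabs_pos_eq; lra. }
  split; [split; auto|].
  apply Rplus_le_compat; apply Series_le; auto.
Qed.

Lemma sZ_plus (f g : Z -> R) : summableZ f -> summableZ g ->
  summableZ (fun n => f n + g n) /\ SeriesZ (fun n => f n + g n) = SeriesZ f + SeriesZ g.
Proof.
  intros [F1 F2] [G1 G2]. unfold summableZ, SeriesZ. split.
  - split; [exact (ex_series_plus _ _ F1 G1) | exact (ex_series_plus _ _ F2 G2)].
  - rewrite (Series_plus _ _ F1 G1), (Series_plus _ _ F2 G2). ring.
Qed.

Lemma sZ_scal (c : R) (f : Z -> R) : summableZ f ->
  summableZ (fun n => c * f n) /\ SeriesZ (fun n => c * f n) = c * SeriesZ f.
Proof.
  intros [F1 F2]. unfold summableZ, SeriesZ. split.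
  - split; [exact (ex_series_scal_l c _ F1) | exact (ex_series_scal_l c _ F2)].
  - rewrite !Series_scal_l. ring.
Qed.

Lemma sZ_ext (f g : Z -> R) : (forall n, f n = g n) -> summableZ f ->
  summableZ g /\ SeriesZ g = SeriesZ f.
Proof.
  intros H [F1 F2]. unfold summableZ, SeriesZ. split.
  - split; eapply ex_series_ext; [|exact F1| |exact F2]; intros; simpl; auto.
  - rewrite (Series_ext _ _ (fun n => H (Z.of_nat n))).
    rewrite (Series_ext _ _ (fun n => H (- Z.of_nat n - 1)%Z)). auto.
Qed.

Lemma sZ_zero : summableZ (fun _ => 0) /\ SeriesZ (fun _ => 0) = 0.
Proof.
  assert (G : ex_series (fun n : nat => 0 ^ n)) by (apply ex_series_geom; rewrite Rabs_R0; lra).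
  assert (H : summableZ (fun _ : Z => 0)).
  { split; apply ex_series_ext with (a := fun n : nat => scal 0 (0 ^ n));
      try (intros; unfold scal; simpl; unfold mult; simpl; ring);
      exact (ex_series_scal_l 0 _ G). }
  split; auto. unfold SeriesZ.
  rewrite (Series_ext (fun _ : nat => 0) (fun n => 0 * 0 ^ n)) by (intros; ring).
  rewrite Series_scal_l. ring.
Qed.

Lemma sZ_shiftm (f : Z -> R) : summableZ f ->
  summableZ (fun n => f (n - 1)%Z) /\ SeriesZ (fun n => f (n - 1)%Z) = SeriesZ f.
Proof.
  intros [F1 F2]. unfold summableZ, SeriesZ.
  assert (Ep : forall k : nat, f (Z.of_nat (S k) - 1)%Z = f (Z.of_nat k)).
  { intros k. f_equal. lia. }
  assert (En : forall k : nat, f (- Z.of_nat (S k) - 1)%Z = f (- Z.of_nat k - 1 - 1)%Z).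
  { intros k. f_equal. lia. }
  assert (P1 : ex_series (fun n : nat => f (Z.of_nat n - 1)%Z)).
  { apply ex_series_incr_1. eapply ex_series_ext; [|exact F1]. intros k; cbv beta; rewrite Ep; reflexivity. }
  assert (P2 : ex_series (fun n : nat => f (- Z.of_nat n - 1 - 1)%Z)).
  { apply ex_series_incr_1 in F2. eapply ex_series_ext; [|exact F2]. intros k; cbv beta; rewrite En; reflexivity. }
  split; [split; auto|].
  rewrite (Series_incr_1 _ P1).
  rewrite (Series_incr_1 _ F2).
  rewrite (Series_ext (fun k : nat => f (Z.of_nat (S k) - 1)%Z) (fun k => f (Z.of_nat k))) by exact Ep.
  rewrite (Series_ext (fun k : nat => f (- Z.of_nat (S k) - 1)%Z) (fun k => f (- Z.of_nat k - 1 - 1)%Z)) by exact En.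
  simpl. ring.
Qed.

Lemma sZ_shiftp (f : Z -> R) : summableZ f ->
  summableZ (fun n => f (n + 1)%Z) /\ SeriesZ (fun n => f (n + 1)%Z) = SeriesZ f.
Proof.
  intros [F1 F2]. unfold summableZ, SeriesZ.
  assert (Ep : forall k : nat, f (Z.of_nat (S k)) = f (Z.of_nat k + 1)%Z).
  { intros k. f_equal. lia. }
  assert (En : forall k : nat, f (- Z.of_nat (S k) - 1 + 1)%Z = f (- Z.of_nat k - 1)%Z).
  { intros k. f_equal. lia. }
  assert (P1 : ex_series (fun n : nat => f (Z.of_nat n + 1)%Z)).
  { apply ex_series_incr_1 in F1. eapply ex_series_ext; [|exact F1]. intros k; cbv beta; rewrite Ep; reflexivity. }
  assert (P2 : ex_series (fun n : nat => f (- Z.of_nat n - 1 + 1)%Z)).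
  { apply ex_series_incr_1. eapply ex_series_ext; [|exact F2]. intros k; cbv beta; rewrite En; reflexivity. }
  split; [split; auto|].
  rewrite (Series_incr_1 _ P2).
  rewrite (Series_incr_1 _ F1).
  rewrite (Series_ext (fun k : nat => f (Z.of_nat (S k))) (fun k => f (Z.of_nat k + 1)%Z)) by exact Ep.
  rewrite (Series_ext (fun k : nat => f (- Z.of_nat (S k) - 1 + 1)%Z) (fun k => f (- Z.of_nat k - 1)%Z)) by exact En.
  simpl. ring.
Qed.

Lemma sZ_shift (k : Z) : forall f : Z -> R, summableZ f ->
  summableZ (fun n => f (n - k)%Z) /\ SeriesZ (fun n => f (n - k)%Z) = SeriesZ f.
Proof.
  induction k using Z.peano_ind; intros f Hf.
  - apply (sZ_ext f); auto. intros; f_equal; lia.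
  - destruct (IHk f Hf) as [A B].
    destruct (sZ_shiftm _ A) as [C D].
    assert (X : forall n, f (n - 1 - k)%Z = f (n - Z.succ k)%Z) by (intros; f_equal; lia).
    destruct (sZ_ext _ _ X C) as [E G].
    split; auto. rewrite G, D, B; auto.
  - destruct (IHk f Hf) as [A B].
    destruct (sZ_shiftp _ A) as [C D].
    assert (X : forall n, f (n + 1 - k)%Z = f (n - Z.pred k)%Z) by (intros; f_equal; lia).
    destruct (sZ_ext _ _ X C) as [E G].
    split; auto. rewrite G, D, B; auto.
Qed.


Lemma fold_add (l : list nat) (F G H : nat -> C) : (forall j, F j = Cplus (G j) (H j)) ->
  fold_right Cplus (RtoC 0) (map F l) =
  Cplus (fold_right Cplus (RtoC 0) (map G l)) (fold_right Cplus (RtoC 0) (map H l)).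
Proof.
  intros E. induction l as [|j l IH]; simpl.
  - ring.
  - rewrite IH, E. ring.
Qed.

Lemma fold_scal (l : list nat) (F G : nat -> C) (c : C) : (forall j, F j = Cmult c (G j)) ->
  fold_right Cplus (RtoC 0) (map F l) = Cmult c (fold_right Cplus (RtoC 0) (map G l)).
Proof.
  intros E. induction l as [|j l IH]; simpl.
  - ring.
  - rewrite IH, E. ring.
Qed.

Lemma band_add w a (x y z : Z -> C) : (forall n, x n = Cplus (y n) (z n)) ->
  forall n, band_apply w a x n = Cplus (band_apply w a y n) (band_apply w a z n).
Proof.
  intros E n. unfold band_apply. apply fold_add. intros j. cbv zeta. rewrite E. ring.
Qed.

Lemma band_scal w a (x y : Z -> C) (c : C) : (forall n, x n = Cmult c (y n)) ->
  forall n, band_apply w a x n = Cmult c (band_apply w a y n).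
Proof.
  intros E n. unfold band_apply. apply fold_scal. intros j. cbv zeta. rewrite E. ring.
Qed.

Lemma pow2_ge1 (n : nat) : 1 <= 2 ^ n.
Proof. apply pow_R1_Rle. lra. Qed.

Lemma fold_R_nonneg (l : list nat) (G : nat -> R) : (forall j, 0 <= G j) ->
  0 <= fold_right Rplus 0 (map G l).
Proof.
  intros H. induction l; simpl; [lra|]. specialize (H a). lra.
Qed.

Lemma fold_bound (l : list nat) (F : nat -> C) (G : nat -> R) (c : R) : 0 <= c ->
  (forall j, 0 <= G j) -> (forall j, In j l -> Cmod (F j) ^ 2 <= c * G j) ->
  Cmod (fold_right Cplus (RtoC 0) (map F l)) ^ 2 <= 2 ^ (length l) * c * fold_right Rplus 0 (map G l).
Proof.
  intros Hc HG. induction l as [|j l IH]; intros HF; simpl.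
  - rewrite Cmod_0. lra.
  - assert (IH' := IH (fun i Hi => HF i (or_intror Hi))).
    assert (Hj := HF j (or_introl eq_refl)).
    set (S := fold_right Cplus (RtoC 0) (map F l)) in *.
    set (T := fold_right Rplus 0 (map G l)) in *.
    assert (Tri := Cmod_triangle (F j) S).
    assert (P0 := Cmod_ge_0 (Cplus (F j) S)).
    assert (P1 := Cmod_ge_0 (F j)). assert (P2 := Cmod_ge_0 S).
    assert (E1 := pow2_ge1 (length l)).
    assert (G0 := HG j).
    assert (cG : 0 <= c * G j) by nra.
    set (u := Cmod (F j)) in *. set (v := Cmod S) in *. set (q := Cmod (Cplus (F j) S)) in *.
    set (p := 2 ^ length l) in *.
    assert (q ^ 2 <= (u + v) ^ 2) by nra.
    assert (0 <= (u - v) ^ 2) by apply pow2_ge_0.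
    assert ((u + v) ^ 2 <= 2 * u ^ 2 + 2 * v ^ 2) by nra.
    assert (c * G j <= p * (c * G j)) by nra.
    nra.
Qed.

Lemma sZ_fold (L : list nat) (s : nat -> Z) (f : Z -> R) : summableZ f ->
  summableZ (fun n => fold_right Rplus 0 (map (fun j => f (n - s j)%Z) L)) /\
  SeriesZ (fun n => fold_right Rplus 0 (map (fun j => f (n - s j)%Z) L)) = INR (length L) * SeriesZ f.
Proof.
  intros Hf. induction L as [|j L IH]; simpl.
  - destruct sZ_zero as [A B]. split; auto. rewrite B; ring.
  - destruct IH as [A B]. destruct (sZ_shift (s j) f Hf) as [C D].
    destruct (sZ_plus _ _ C A) as [E G]. split; auto.
    rewrite G, B, D. destruct (length L); simpl; ring.
Qed.

Lemma unifM (w : nat) (a : Z -> Z -> C) :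
  (forall k : Z, (- Z.of_nat w <= k <= Z.of_nat w)%Z -> bounded_seqZ (a k)) ->
  exists M, 0 <= M /\ forall (j : nat) n, (j <= 2 * w)%nat -> Cmod (a (Z.of_nat j - Z.of_nat w)%Z n) <= M.
Proof.
  intros H.
  assert (forall m : nat, exists M, 0 <= M /\ forall (j : nat) n, (j <= m)%nat -> (j <= 2 * w)%nat ->
            Cmod (a (Z.of_nat j - Z.of_nat w)%Z n) <= M).
  { induction m as [|m IH].
    - destruct (H (Z.of_nat 0 - Z.of_nat w)%Z ltac:(lia)) as [M HM].
      exists (Rmax 0 M). split; [apply Rmax_l|]. intros j n Hj _.
      replace j with 0%nat by lia. eapply Rle_trans; [apply HM|apply Rmax_r].
    - destruct IH as [M [HM0 HM]].
      destruct (le_lt_dec (S m) (2 * w)) as [Hle|Hlt].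
      + destruct (H (Z.of_nat (S m) - Z.of_nat w)%Z ltac:(lia)) as [M' HM'].
        exists (Rmax M M'). split; [eapply Rle_trans; [exact HM0|apply Rmax_l]|].
        intros j n Hj Hj2. destruct (Nat.eq_dec j (S m)) as [->|Hne].
        * eapply Rle_trans; [apply HM'|apply Rmax_r].
        * eapply Rle_trans; [apply HM; lia|apply Rmax_l].
      + exists M. split; auto. intros j n Hj Hj2. apply HM; lia. }
  destruct (H0 (2 * w)%nat) as [M [HM0 HM]]. exists M. split; auto.
Qed.

Definition bandsum (w : nat) (x : Z -> C) (n : Z) : R :=
  fold_right Rplus 0 (map (fun j : nat => Cmod (x (n - (Z.of_nat j - Z.of_nat w))%Z) ^ 2) (seq 0 (2 * w + 1))).

Lemma band_pt (w : nat) (a : Z -> Z -> C) (M : R) (x : Z -> C) (n : Z) : 0 <= M ->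
  (forall (j : nat) n, (j <= 2 * w)%nat -> Cmod (a (Z.of_nat j - Z.of_nat w)%Z n) <= M) ->
  Cmod (band_apply w a x n) ^ 2 <= 2 ^ (2 * w + 1) * M ^ 2 * bandsum w x n.
Proof.
  intros HM0 HM. unfold band_apply, bandsum.
  rewrite <- (length_seq (2 * w + 1) 0) at 2.
  apply fold_bound.
  - nra.
  - intros j. apply pow2_ge_0.
  - intros j Hj. apply in_seq in Hj. cbv zeta. rewrite Cmod_mult.
    assert (A := HM j n ltac:(lia)). assert (B := Cmod_ge_0 (a (Z.of_nat j - Z.of_nat w)%Z n)).
    assert (D := Cmod_ge_0 (x (n - (Z.of_nat j - Z.of_nat w))%Z)).
    set (u := Cmod (a (Z.of_nat j - Z.of_nat w)%Z n)) in *.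
    set (v := Cmod (x (n - (Z.of_nat j - Z.of_nat w))%Z)) in *.
    assert (u ^ 2 <= M ^ 2) by nra. nra.
Qed.

Lemma band_l2 (w : nat) (a : Z -> Z -> C) (M : R) (x : Z -> C) : 0 <= M ->
  (forall (j : nat) n, (j <= 2 * w)%nat -> Cmod (a (Z.of_nat j - Z.of_nat w)%Z n) <= M) ->
  l2 x -> l2 (band_apply w a x) /\
  SeriesZ (fun n => Cmod (band_apply w a x n) ^ 2) <=
    2 ^ (2 * w + 1) * M ^ 2 * INR (2 * w + 1) * SeriesZ (fun n => Cmod (x n) ^ 2).
Proof.
  intros HM0 HM Hx. unfold l2 in *.
  destruct (sZ_fold (seq 0 (2 * w + 1)) (fun j => (Z.of_nat j - Z.of_nat w)%Z) _ Hx) as [A B].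
  destruct (sZ_scal (2 ^ (2 * w + 1) * M ^ 2) _ A) as [C D].
  destruct (sZ_le (fun n => Cmod (band_apply w a x n) ^ 2) _ ltac:(intros n; split;
     [apply pow2_ge_0 | apply (band_pt w a M x n HM0 HM)]) C) as [E G].
  split; auto. eapply Rle_trans; [exact G|]. unfold bandsum. rewrite D.
  unfold bandsum. rewrite B, length_seq. lra.
Qed.


Definition inbox (N : nat) (n : Z) : bool :=
  andb (Z.leb (- Z.of_nat N) n) (Z.ltb n (Z.of_nat N)).

Lemma inbox_pos N (k : nat) : inbox N (Z.of_nat k) = Nat.ltb k N.
Proof.
  unfold inbox. destruct (Nat.ltb_spec k N), (Z.leb_spec (- Z.of_nat N) (Z.of_nat k)),
    (Z.ltb_spec (Z.of_nat k) (Z.of_nat N)); simpl; auto; lia.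
Qed.

Lemma inbox_neg N (k : nat) : inbox N (- Z.of_nat k - 1)%Z = Nat.ltb k N.
Proof.
  unfold inbox. destruct (Nat.ltb_spec k N), (Z.leb_spec (- Z.of_nat N) (- Z.of_nat k - 1)),
    (Z.ltb_spec (- Z.of_nat k - 1) (Z.of_nat N)); simpl; auto; lia.
Qed.

Lemma inbox_out N n : (n < - Z.of_nat N \/ Z.of_nat N - 1 < n)%Z -> inbox N n = false.
Proof.
  intros H. unfold inbox. destruct (Z.leb_spec (- Z.of_nat N) n),
    (Z.ltb_spec n (Z.of_nat N)); simpl; auto; lia.
Qed.

Lemma half_tail (a : nat -> R) : ex_series a -> forall d, 0 < d ->
  exists N0, forall N, (N0 <= N)%nat -> Series (fun k => if Nat.ltb k N then 0 else a k) < d.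
Proof.
  intros Ha d Hd.
  assert (Hs := Series_correct _ Ha). apply is_series_Reals in Hs.
  destruct (Hs d Hd) as [N0 HN0]. exists (S N0). intros N HN.
  rewrite (Series_incr_n_aux _ N).
  2:{ intros k Hk. destruct (Nat.ltb_spec k N); auto; lia. }
  rewrite (Series_ext _ (fun k => a (N + k)%nat)).
  2:{ intros k. destruct (Nat.ltb_spec (N + k) N); auto; lia. }
  rewrite (Series_incr_n a N) in HN0 by (auto; lia).
  specialize (HN0 (Init.Nat.pred N) ltac:(lia)).
  unfold Rdist in HN0.
  set (u := sum_f_R0 a (Init.Nat.pred N)) in *.
  set (v := Series (fun k => a (N + k)%nat)) in *.
  replace (u - (u + v)) with (- v) in HN0 by ring.
  rewrite Rabs_Ropp in HN0. pose proof (Rle_abs v). lra.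
Qed.

Definition tailf (N : nat) (f : Z -> R) (n : Z) : R := if inbox N n then 0 else f n.

Lemma tail_small (f : Z -> R) : (forall n, 0 <= f n) -> summableZ f -> forall d, 0 < d ->
  exists N, summableZ (tailf N f) /\ SeriesZ (tailf N f) < d.
Proof.
  intros Hf0 [F1 F2] d Hd.
  destruct (half_tail _ F1 (d/2) ltac:(lra)) as [N1 H1].
  destruct (half_tail _ F2 (d/2) ltac:(lra)) as [N2 H2].
  exists (Nat.max N1 N2).
  destruct (sZ_le (tailf (Nat.max N1 N2) f) f) as [A _]; auto.
  { intros n. unfold tailf. destruct (inbox _ n); split; auto; lra. }
  split; auto. unfold SeriesZ.
  specialize (H1 (Nat.max N1 N2) ltac:(lia)). specialize (H2 (Nat.max N1 N2) ltac:(lia)).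
  unfold tailf. rewrite (Series_ext _ _ (fun k => f_equal (fun b : bool => if b then 0 else f (Z.of_nat k)) (inbox_pos (Nat.max N1 N2) k))).
  rewrite (Series_ext _ _ (fun k => f_equal (fun b : bool => if b then 0 else f (- Z.of_nat k - 1)%Z) (inbox_neg (Nat.max N1 N2) k))).
  split; [exact A | lra].
Qed.


Lemma sZ_nonneg (f : Z -> R) : (forall n, 0 <= f n) -> summableZ f -> 0 <= SeriesZ f.
Proof.
  intros H Hf. destruct sZ_zero as [Z0 Z1].
  destruct (sZ_le (fun _ => 0) f) as [_ L]; auto. intros; split; auto; lra. lra.
Qed.

Lemma sq_diff (u v : C) (t : R) : 0 < t ->
  Cmod (Cminus u v) ^ 2 <= (1 + t) * Cmod u ^ 2 + (1 + / t) * Cmod v ^ 2.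
Proof.
  intros Ht. unfold Cminus.
  assert (T := Cmod_triangle u (Copp v)). rewrite Cmod_opp in T.
  assert (P0 := Cmod_ge_0 (Cplus u (Copp v))).
  assert (P1 := Cmod_ge_0 u). assert (P2 := Cmod_ge_0 v).
  set (q := Cmod (Cplus u (Copp v))) in *. set (a := Cmod u) in *. set (b := Cmod v) in *.
  assert (q ^ 2 <= (a + b) ^ 2) by nra.
  set (s := / t). assert (ts : t * s = 1) by (unfold s; field; lra).
  assert (s0 : 0 < s) by (unfold s; apply Rinv_0_lt_compat; lra).
  assert (0 <= (t * a - b) ^ 2) by apply pow2_ge_0.
  assert (2 * a * b <= t * a ^ 2 + s * b ^ 2).
  { assert (s * (t * a - b) ^ 2 >= 0) by nra.
    assert (s * (t * a - b) ^ 2 = t * (t * s) * a ^ 2 - 2 * (t * s) * a * b + s * b ^ 2) by ring.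
    rewrite ts in *. nra. }
  nra.
Qed.

Section Key.
Variables (w : nat) (a : Z -> Z -> C) (M : R).
Hypothesis HM0 : 0 <= M.
Hypothesis HM : forall (j : nat) n, (j <= 2 * w)%nat -> Cmod (a (Z.of_nat j - Z.of_nat w)%Z n) <= M.

Lemma key (x : Z -> C) : l2 x -> l2norm x = 1 -> forall e, 0 < e ->
  exists (N : nat) (y : Z -> C), l2 y /\
    (forall n, (n < - Z.of_nat N \/ Z.of_nat N - 1 < n)%Z -> y n = RtoC 0) /\
    l2norm y = 1 /\ l2norm (band_apply w a y) <= l2norm (band_apply w a x) + e.
Proof.
  intros Hx Hn e He.
  set (f := fun n => Cmod (x n) ^ 2).
  assert (f0 : forall n, 0 <= f n) by (intros; apply pow2_ge_0).
  assert (Sx : SeriesZ f = 1).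
  { unfold l2norm in Hn. fold f in Hn. assert (0 <= SeriesZ f) by (apply sZ_nonneg; auto).
    rewrite <- (pow2_sqrt (SeriesZ f)) by auto. rewrite Hn. ring. }
  set (K := 2 ^ (2 * w + 1) * M ^ 2 * INR (2 * w + 1)).
  assert (K0 : 0 <= K).
  { unfold K. apply Rmult_le_pos; [apply Rmult_le_pos|apply pos_INR]; [apply pow_le; lra|apply pow2_ge_0]. }
  destruct (band_l2 w a M x HM0 HM Hx) as [HAx _].
  set (P := SeriesZ (fun n => Cmod (band_apply w a x n) ^ 2)).
  assert (P0 : 0 <= P) by (apply sZ_nonneg; auto; intros; apply pow2_ge_0).
  set (th := e ^ 2 / (4 * (P + 1))).
  assert (th0 : 0 < th) by (unfold th; apply Rdiv_lt_0_compat; nra).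
  assert (thP : th * (4 * (P + 1)) = e ^ 2) by (unfold th; field; lra).
  set (Zc := (1 + / th) * K + P + e ^ 2).
  assert (Zc0 : 0 <= Zc).
  { unfold Zc. assert (0 < / th) by (apply Rinv_0_lt_compat; lra). nra. }
  set (dl := Rmin (1/2) ((e ^ 2 / 2) / (Zc + 1))).
  assert (dl0 : 0 < dl).
  { unfold dl. apply Rmin_glb_lt; [lra|]. apply Rdiv_lt_0_compat; nra. }
  destruct (tail_small f f0 Hx dl dl0) as [N [TS TD]].
  set (D := SeriesZ (tailf N f)) in *.
  assert (D0 : 0 <= D).
  { apply sZ_nonneg; auto. intros n; unfold tailf; destruct (inbox N n); auto; lra. }
  set (xN := fun n => if inbox N n then x n else RtoC 0).
  set (d := fun n => if inbox N n then RtoC 0 else x n).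
  assert (Ed : forall n, Cmod (d n) ^ 2 = tailf N f n).
  { intros n. unfold d, tailf, f. destruct (inbox N n); auto. rewrite Cmod_0. ring. }
  assert (Exd : forall n, x n = Cplus (xN n) (d n)).
  { intros n. unfold xN, d. destruct (inbox N n); ring. }
  assert (Ef : forall n, f n = Cmod (xN n) ^ 2 + Cmod (d n) ^ 2).
  { intros n. unfold f, xN, d. destruct (inbox N n); rewrite Cmod_0; ring. }
  destruct (sZ_ext _ (fun n => Cmod (d n) ^ 2) (fun n => eq_sym (Ed n)) TS) as [Hd Hd'].
  destruct (sZ_le (fun n => Cmod (xN n) ^ 2) f) as [HxN _]; auto.
  { intros n. rewrite Ef. split; [apply pow2_ge_0|]. assert (0 <= Cmod (d n) ^ 2) by apply pow2_ge_0. lra. }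
  destruct (sZ_plus _ _ HxN Hd) as [_ Hpl].
  destruct (sZ_ext f _ Ef Hx) as [_ Hpl'].
  set (c2 := SeriesZ (fun n => Cmod (xN n) ^ 2)) in *.
  assert (c2D : c2 = 1 - D).
  { fold D in Hd'. rewrite <- Hpl' in Sx. rewrite Hpl, Hd' in Sx. lra. }
  assert (Dh : D <= 1/2) by (assert (dl <= 1/2) by apply Rmin_l; lra).
  assert (c2p : 0 < c2) by lra.
  destruct (band_l2 w a M xN HM0 HM HxN) as [HAxN _].
  destruct (band_l2 w a M d HM0 HM Hd) as [HAd HAdK].
  set (Q := SeriesZ (fun n => Cmod (band_apply w a xN n) ^ 2)).
  assert (EA : forall n, band_apply w a xN n = Cminus (band_apply w a x n) (band_apply w a d n)).
  { intros n. rewrite (band_add w a x xN d Exd n). ring. }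
  assert (Qb : Q <= (1 + th) * P + (1 + / th) * (K * D)).
  { destruct (sZ_scal (1 + th) _ HAx) as [S1 S1'].
    destruct (sZ_scal (1 + / th) _ HAd) as [S2 S2'].
    destruct (sZ_plus _ _ S1 S2) as [S3 S3'].
    assert (PW : forall n, 0 <= Cmod (band_apply w a xN n) ^ 2 <=
      (1 + th) * Cmod (band_apply w a x n) ^ 2 + (1 + / th) * Cmod (band_apply w a d n) ^ 2).
    { intros n. split; [apply pow2_ge_0|]. rewrite EA. apply sq_diff. exact th0. }
    destruct (sZ_le _ _ PW S3) as [_ L].
    fold Q in L. rewrite S3', S1', S2' in L. fold P in L.
    assert (SeriesZ (fun n => Cmod (band_apply w a d n) ^ 2) <= K * D).
    { eapply Rle_trans; [exact HAdK|]. fold K. rewrite Hd'. apply Rle_refl. }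
    assert (0 < / th) by (apply Rinv_0_lt_compat; lra).
    nra. }
  set (s := / sqrt c2).
  assert (sc : 0 < sqrt c2) by (apply sqrt_lt_R0; lra).
  assert (s0 : 0 < s) by (unfold s; apply Rinv_0_lt_compat; lra).
  assert (ssc : s * s * c2 = 1).
  { unfold s. rewrite <- (sqrt_sqrt c2) at 3 by lra. field. lra. }
  set (y := fun n => Cmult (RtoC s) (xN n)).
  assert (Ey : forall n, s * s * Cmod (xN n) ^ 2 = Cmod (y n) ^ 2).
  { intros n. unfold y. rewrite Cmod_mult, Cmod_R, Rabs_pos_eq by lra. ring. }
  destruct (sZ_scal (s * s) _ HxN) as [Y1 Y2].
  destruct (sZ_ext _ _ Ey Y1) as [Y3 Y4].
  assert (EAy : forall n, s * s * Cmod (band_apply w a xN n) ^ 2 = Cmod (band_apply w a y n) ^ 2).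
  { intros n. rewrite (band_scal w a y xN (RtoC s) (fun n => eq_refl) n).
    rewrite Cmod_mult, Cmod_R, Rabs_pos_eq by lra. ring. }
  destruct (sZ_scal (s * s) _ HAxN) as [Z1 Z2].
  destruct (sZ_ext _ _ EAy Z1) as [Z3 Z4].
  exists N, y. split; [exact Y3|]. split.
  { intros n Hn'. unfold y, xN. rewrite inbox_out by exact Hn'. ring. }
  split.
  { unfold l2norm. rewrite Y4, Y2. fold c2. rewrite ssc. apply sqrt_1. }
  unfold l2norm at 1. rewrite Z4, Z2. fold Q. unfold l2norm. fold P.
  assert (sP := sqrt_pos P). assert (sP2 := pow2_sqrt P P0).
  rewrite <- (sqrt_pow2 (sqrt P + e)) by lra.
  apply sqrt_le_1.
  { apply Rmult_le_pos; [nra|]. apply sZ_nonneg; auto. intros; apply pow2_ge_0. }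
  { apply pow2_ge_0. }
  assert (QQ : Q <= (P + e ^ 2) * c2).
  { rewrite c2D.
    set (it := / th) in *.
    assert (it0 : 0 < it) by (unfold it; apply Rinv_0_lt_compat; lra).
    assert (thPb : th * P <= e ^ 2 / 4) by nra.
    set (r := e ^ 2 / 2 / (Zc + 1)) in *.
    assert (r0 : 0 < r) by (unfold r; apply Rdiv_lt_0_compat; nra).
    assert (rZ : r * (Zc + 1) = e ^ 2 / 2) by (unfold r; field; lra).
    assert (Dr : D <= r) by (assert (dl <= r) by apply Rmin_r; lra).
    assert (DZ : D * Zc <= e ^ 2 / 2) by nra.
    unfold Zc in DZ. nra. }
  assert (s * s * Q <= P + e ^ 2).
  { assert (s * s * Q <= s * s * ((P + e ^ 2) * c2)) by (apply Rmult_le_compat_l; nra).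
    replace (s * s * ((P + e ^ 2) * c2)) with ((s * s * c2) * (P + e ^ 2)) in H by ring.
    rewrite ssc in H. lra. }
  nra.
Qed.
End Key.


Lemma e0_unit : let e0 := fun n : Z => if Z.eqb n 0 then RtoC 1 else RtoC 0 in
  l2 e0 /\ l2norm e0 = 1.
Proof.
  intros e0.
  assert (A : forall k : nat, Cmod (e0 (Z.of_nat (S k))) ^ 2 = 0 * 0 ^ k).
  { intros k. unfold e0. replace (Z.of_nat (S k) =? 0)%Z with false by (symmetry; apply Z.eqb_neq; lia).
    rewrite Cmod_0. ring. }
  assert (B : forall k : nat, Cmod (e0 (- Z.of_nat k - 1)%Z) ^ 2 = 0 * 0 ^ k).
  { intros k. unfold e0. replace (- Z.of_nat k - 1 =? 0)%Z with false by (symmetry; apply Z.eqb_neq; lia).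
    rewrite Cmod_0. ring. }
  assert (G : ex_series (fun n : nat => 0 ^ n)) by (apply ex_series_geom; rewrite Rabs_R0; lra).
  assert (G0 := ex_series_scal_l 0 _ G).
  assert (P1 : ex_series (fun n : nat => Cmod (e0 (Z.of_nat n)) ^ 2)).
  { apply ex_series_incr_1. eapply ex_series_ext; [|exact G0]. intros k. rewrite A. reflexivity. }
  assert (P2 : ex_series (fun n : nat => Cmod (e0 (- Z.of_nat n - 1)%Z) ^ 2)).
  { eapply ex_series_ext; [|exact G0]. intros k. rewrite B. reflexivity. }
  split; [split; auto|].
  unfold l2norm, SeriesZ. rewrite (Series_incr_1 _ P1).
  rewrite (Series_ext _ _ A), (Series_ext _ _ B), Series_scal_l.
  unfold e0; simpl. rewrite Cmod_R, Rabs_R1. replace (1 ^ 2 + 0 * _ + 0 * _) with 1 by ring.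
  apply sqrt_1.
Qed.

Theorem corollary3p2 :
  forall (w : nat) (a : Z -> Z -> C),
    (forall k : Z, (- Z.of_nat w <= k <= Z.of_nat w)%Z -> bounded_seqZ (a k)) ->
    forall eps : R, 0 < eps ->
    exists l r : Z,
      Rbar_le (nu (band_apply w a)) (nu_lr (band_apply w a) l r) /\
      Rbar_lt (nu_lr (band_apply w a) l r) (Rbar_plus (nu (band_apply w a)) (Finite eps)).
Proof.
  intros w a Ha eps Heps.
  destruct (unifM w a Ha) as [M [HM0 HM]].
  set (A := band_apply w a).
  set (E := fun t => exists x, l2 x /\ l2norm x = 1 /\ t = l2norm (A x)).
  destruct (Glb_Rbar_correct E) as [Elb Eglb].
  destruct e0_unit as [U1 U2].
  assert (Et0 : E (l2norm (A (fun n : Z => if Z.eqb n 0 then RtoC 1 else RtoC 0)))).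
  { eexists; split; [exact U1|split; [exact U2|reflexivity]]. }
  assert (Hlb0 : is_lb_Rbar E (Finite 0)).
  { intros t [x [_ [_ ->]]]. simpl. unfold l2norm. apply sqrt_pos. }
  assert (Hle0 := Eglb _ Hlb0).
  assert (Hle1 := Elb _ Et0).
  unfold nu. fold A. fold E.
  destruct (Glb_Rbar E) as [v| |] eqn:Hv; simpl in Hle0, Hle1; try contradiction.
  destruct (classic (exists t, E t /\ t < v + eps / 2)) as [[t [[x [Hx [Hxn ->]]] Ht]] | Hno].
  2:{ exfalso.
      assert (L : is_lb_Rbar E (Finite (v + eps / 2))).
      { intros t Et. simpl. apply Rnot_lt_le. intros Hlt. apply Hno. exists t; auto. }
      specialize (Eglb _ L). simpl in Eglb. lra. }
  destruct (key w a M HM0 HM x Hx Hxn (eps / 2) ltac:(lra)) as [N [y [Hy [Hsupp [Hyn HyA]]]]].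
  exists (- Z.of_nat N)%Z, (Z.of_nat N - 1)%Z.
  set (Elr := fun t => exists x, l2 x /\
     (forall n, (n < - Z.of_nat N \/ Z.of_nat N - 1 < n)%Z -> x n = RtoC 0) /\
     l2norm x = 1 /\ t = l2norm (A x)).
  unfold nu_lr. fold A. fold Elr.
  destruct (Glb_Rbar_correct Elr) as [Llb Lglb].
  split.
  - apply Lglb. intros t [z [Hz [_ [Hzn ->]]]]. apply Elb. exists z; auto.
  - assert (Ey : Elr (l2norm (A y))) by (exists y; auto).
    apply Rbar_le_lt_trans with (Finite (l2norm (A y))).
    + apply Llb; exact Ey.
    + simpl. fold A in HyA. lra.
Qed.
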